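(* For real $0\le x<1$, $$\log\mathcal C_2\left(\frac x2\right)=\frac x2 \log(2\pi)+\log\sqrt\pi-\frac12\log\left(\cos\frac{\pi x}{2}\right)+\log\frac{G_{\mathrm B} \left(\frac12-\frac x{2}\right)}{G_{\mathrm B} \left(\frac32+\frac x2\right)}.$$
   Context: $G_{\mathrm B}$ denotes the Barnes $G$-function ($G_{\mathrm B}(z+1)=\Gamma(z)G_{\mathrm B}(z)$, $G_{\mathrm B}(1)=1$), positive on $(0,\infty)$. For real $|x|<\frac12$, $\mathcal C_2(x)=\prod_{n\ge1,\ n\text{ odd}}\left\{\left(\frac{1-\frac{x}{n/2}}{1+\frac{x}{n/2}}\right)^{n/2}e^{2x}\right\}$ (the double cosine function of Kurokawa–Koyama; a convergent positive product), and $\log$ is the real logarithm. *)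

(* Defs.v *)
From Stdlib Require Import Reals.
From Coquelicot Require Import Coquelicot.
Open Scope R_scope.

Fixpoint prod_1_to (f : nat -> R) (N : nat) : R :=
  match N with
  | O => 1
  | S n => prod_1_to f n * f (S n)
  end.

Definition euler_gamma : R :=
  real (Lim_seq (fun n => sum_f_R0 (fun k => / INR (S k)) n - ln (INR (S n)))).

(* Barnes G-function via its Weierstrass product:
   G(1+w) = (2 pi)^{w/2} exp(-(w + (1+gamma) w^2)/2)
            * prod_{k>=1} (1 + w/k)^k exp(-w + w^2/(2k)). *)
Definition barnes_factor (w : R) (k : nat) : R :=
  (1 + w / INR k) ^ k * exp (- w + w ^ 2 / (2 * INR k)).

Definition BarnesG (z : R) : R :=
  let w := z - 1 in
  Rpower (2 * PI) (w / 2) * exp (- (w + (1 + euler_gamma) * w ^ 2) / 2)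
  * real (Lim_seq (fun N => prod_1_to (barnes_factor w) N)).

(* Double cosine function C_2(x) = prod_{n odd} ((1 - x/(n/2))/(1 + x/(n/2)))^{n/2} e^{2x},
   the infinite product being the limit of the partial products over n = 1,3,...,2N-1. *)
Definition C2_factor (x : R) (n : nat) : R :=
  let h := INR n / 2 in
  Rpower ((1 - x / h) / (1 + x / h)) h * exp (2 * x).

Definition C2 (x : R) : R :=
  real (Lim_seq (fun N => prod_1_to (fun m => C2_factor x (2 * m - 1)%nat) N)).

(* Main.v *)
Require Import Defs.
From Stdlib Require Import Reals Lra Lia.
From Coquelicot Require Import Coquelicot.
Open Scope R_scope.

Fixpoint sum1 (f : nat -> R) (N : nat) : R :=
  match N with O => 0 | S n => sum1 f n + f (S n) end.

Lemma prod_exp (f : nat -> R) (N : nat) :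
  (forall k, (1 <= k)%nat -> 0 < f k) ->
  prod_1_to f N = exp (sum1 (fun k => ln (f k)) N).
Proof.
  intros H; induction N as [|N IH]; simpl.
  - now rewrite exp_0.
  - rewrite IH, exp_plus, exp_ln; [reflexivity| apply H; lia].
Qed.

Lemma sum1_sum_n (f : nat -> R) (N : nat) :
  sum1 f (S N) = sum_n (fun k => f (S k)) N.
Proof.
  induction N as [|N IH].
  - simpl. rewrite sum_O. ring.
  - change (sum1 f (S (S N))) with (sum1 f (S N) + f (S (S N))).
    rewrite IH, sum_Sn. reflexivity.
Qed.

Lemma sum1_ext f g N : (forall k, (1 <= k)%nat -> f k = g k) -> sum1 f N = sum1 g N.
Proof. intros H; induction N; simpl; [reflexivity| rewrite IHN, H; [reflexivity|lia]]. Qed.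

Lemma sum1_plus f g N : sum1 (fun k => f k + g k) N = sum1 f N + sum1 g N.
Proof. induction N; simpl; [ring| rewrite IHN; ring]. Qed.
Lemma sum1_minus f g N : sum1 (fun k => f k - g k) N = sum1 f N - sum1 g N.
Proof. induction N; simpl; [ring| rewrite IHN; ring]. Qed.
Lemma sum1_scal c f N : sum1 (fun k => c * f k) N = c * sum1 f N.
Proof. induction N; simpl; [ring| rewrite IHN; ring]. Qed.

Lemma telesc_series : is_series (fun n => / (INR (S n) * INR (S (S n)))) 1.
Proof.
  change (is_lim_seq (sum_n (fun n => / (INR (S n) * INR (S (S n))))) 1).
  apply (is_lim_seq_ext (fun n => 1 - / INR (S (S n)))).
  - intros n. induction n as [|n IH].
    + rewrite sum_O. simpl. field.
    + rewrite sum_Sn, <- IH. unfold plus; cbn -[INR].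
      rewrite ?S_INR. pose proof (pos_INR n). field. lra.
  - replace (Finite 1) with (Finite (1 - 0)) by (f_equal; ring).
    apply is_lim_seq_minus'. apply is_lim_seq_const.
    assert (H0 := is_lim_seq_inv _ _ is_lim_seq_INR ltac:(discriminate)).
    simpl in H0. apply is_lim_seq_incr_1 in H0. apply is_lim_seq_incr_1 in H0.
    exact H0.
Qed.

Lemma conv_lemma (t : nat -> R) (M : R) :
  (forall k, (1 <= k)%nat -> Rabs (t k) <= M / (INR k)^2) ->
  exists l : R, is_lim_seq (sum1 t) l.
Proof.
  intros H.
  assert (HM : 0 <= M).
  { specialize (H 1%nat (le_n _)). simpl in H. pose proof (Rabs_pos (t 1%nat)). lra. }
  assert (Hex : ex_series (fun k => t (S k))).
  { apply (@ex_series_le R_AbsRing R_CompleteNormedModule _ (fun n => 2 * M * / (INR (S n) * INR (S (S n))))).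
    - intros n. change (norm (t (S n))) with (Rabs (t (S n))).
      eapply Rle_trans; [apply H; lia|].
      rewrite !S_INR. pose proof (pos_INR n).
      set (a := INR n + 1).
      assert (Ha : 1 <= a) by (unfold a; lra).
      replace (2 * M * / (a * (a + 1))) with (M / a^2 * (2 * a * / (a + 1))) by (field; lra).
      rewrite <- (Rmult_1_r (M / a^2)) at 1.
      apply Rmult_le_compat_l.
      + apply Rmult_le_pos; [lra|]. apply Rlt_le, Rinv_0_lt_compat, pow_lt; lra.
      + assert (Hi : / (a+1) * (a+1) = 1) by (field; lra).
        assert (Hp : 0 < / (a+1)) by (apply Rinv_0_lt_compat; lra).
        nra.
    - apply (ex_series_ext (fun n => scal (2*M) (/ (INR (S n) * INR (S (S n)))))).
      { intros n. reflexivity. }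
      apply (@ex_series_scal_l R_AbsRing R_NormedModule). exists 1. apply telesc_series. }
  destruct Hex as [l Hl]. exists l.
  apply is_lim_seq_incr_1.
  apply (is_lim_seq_ext (sum_n (fun k => t (S k)))).
  - intros n; now rewrite sum1_sum_n.
  - exact Hl.
Qed.

Lemma ln_taylor (u : R) : Rabs u <= 1/2 ->
  Rabs (ln (1+u) - u + u^2/2) <= 2 * Rabs u ^ 3.
Proof.
  intros Hu.
  destruct (MVT_abs (fun t => ln (1+t) - t + t^2/2) (fun t => / (1+t) - 1 + t) 0 u)
    as [c [Hc Hcb]].
  { intros c Hc. apply is_derive_Reals.
    assert (Hc' : Rabs c <= 1/2).
    { unfold Rmin, Rmax in Hc. destruct (Rle_dec 0 u); apply Rabs_le; 
      apply Rabs_le_between in Hu; lra. }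
    apply Rabs_le_between in Hc'.
    auto_derive. lra. field. lra. }
  replace (ln (1 + 0) - 0 + 0 ^ 2 / 2) with 0 in Hc
    by (rewrite Rplus_0_r, ln_1; field).
  rewrite Rminus_0_r, Rminus_0_r in Hc. rewrite Hc.
  assert (Hc' : Rabs c <= Rabs u).
  { unfold Rmin, Rmax in Hcb. destruct (Rle_dec 0 u);
    [rewrite (Rabs_pos_eq u), Rabs_pos_eq|rewrite (Rabs_left u), Rabs_left1]; lra. }
  assert (Hc2 : -(1/2) <= c <= 1/2) by (apply Rabs_le_between; lra).
  replace (/ (1 + c) - 1 + c) with (c^2 / (1+c)) by (field; lra).
  rewrite Rabs_div by lra. rewrite (Rabs_pos_eq (1+c)) by lra.
  rewrite <- RPow_abs.
  assert (0 <= Rabs c) by apply Rabs_pos.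
  assert (Rabs c ^2 / (1+c) <= 2 * Rabs u ^ 2).
  { apply Rmult_le_reg_r with (1+c). lra. unfold Rdiv. rewrite Rmult_assoc, Rinv_l by lra.
    rewrite Rmult_1_r. nra. }
  simpl in *. nra.
Qed.

Definition g (n : nat) (b t : R) := cos (b * t) * cos t ^ n.

Lemma g_cont n b t : continuous (g n b) t.
Proof. apply (@ex_derive_continuous R_AbsRing R_NormedModule). unfold g. auto_derive. trivial. Qed.

Lemma ex_g n b : ex_RInt (g n b) 0 (PI/2).
Proof. apply (@ex_RInt_continuous R_CompleteNormedModule). intros; apply g_cont. Qed.

Definition J n b : R := RInt (g n b) 0 (PI/2).

Lemma Hder m b t : is_derive
  (fun t => cos t ^ (S m) * (INR (S (S m)) * sin t * cos (b*t) - b * cos t * sin (b*t))) t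
  ((INR (S (S m)) ^ 2 - b ^ 2) * g (S (S m)) b t - INR (S (S m)) * INR (S m) * g m b t).
Proof.
  auto_derive. trivial. unfold g.
  replace (match m with 0%nat => 1 | S _ => INR m + 1 end) with (INR m + 1)
    by (destruct m; simpl; ring).
  rewrite !S_INR.
  assert (E : sin t ^ 2 = 1 - cos t ^ 2) by (pose proof (sin2_cos2 t); unfold Rsqr in *; simpl; lra).
  simpl pow. ring_simplify. rewrite E. ring.
Qed.

Lemma is_RInt_lin (f1 f2 : R -> R) (a b A B I1 I2 : R) :
  is_RInt f1 a b I1 -> is_RInt f2 a b I2 ->
  is_RInt (fun t => A * f1 t - B * f2 t) a b (A * I1 - B * I2).
Proof.
  intros H1 H2.
  apply (is_RInt_minus (V:=R_NormedModule) (fun t => scal A (f1 t)) (fun t => scal B (f2 t)) a b (scal A I1) (scal B I2)).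
  - apply (@is_RInt_scal R_NormedModule); exact H1.
  - apply (@is_RInt_scal R_NormedModule); exact H2.
Qed.

Lemma J_correct n b : is_RInt (g n b) 0 (PI/2) (J n b).
Proof. apply (@RInt_correct R_CompleteNormedModule). apply ex_g. Qed.

Lemma J_rec m b :
  (INR (S (S m)) ^ 2 - b ^ 2) * J (S (S m)) b = INR (S (S m)) * INR (S m) * J m b.
Proof.
  set (F := fun t => cos t ^ (S m) * (INR (S (S m)) * sin t * cos (b*t) - b * cos t * sin (b*t))).
  set (df := fun t => (INR (S (S m)) ^ 2 - b ^ 2) * g (S (S m)) b t - INR (S (S m)) * INR (S m) * g m b t).
  assert (H1 : is_RInt df 0 (PI/2) (minus (F (PI/2)) (F 0))).
  { apply (@is_RInt_derive R_CompleteNormedModule).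
    - intros x _. apply Hder.
    - intros x _. apply (@ex_derive_continuous R_AbsRing R_NormedModule).
      unfold df, g. auto_derive. trivial. }
  assert (HF : minus (F (PI/2)) (F 0) = 0).
  { unfold F, minus, plus, opp; simpl. rewrite cos_PI2, sin_0, Rmult_0_r, sin_0. ring. }
  rewrite HF in H1.
  assert (H2 := is_RInt_lin _ _ _ _ (INR (S (S m)) ^ 2 - b ^ 2) (INR (S (S m)) * INR (S m)) _ _
    (J_correct (S (S m)) b) (J_correct m b)).
  apply (@is_RInt_unique R_CompleteNormedModule) in H1. apply (@is_RInt_unique R_CompleteNormedModule) in H2.
  unfold df in H1. rewrite H1 in H2. lra.
Qed.

Lemma J1 b : (1 - b ^ 2) * J 1 b = cos (b * (PI/2)).
Proof.
  set (F := fun t => sin t * cos (b*t) - b * cos t * sin (b*t)).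
  assert (H1 : is_RInt (fun t => (1 - b^2) * g 1 b t - 0 * g 1 b t) 0 (PI/2) (minus (F (PI/2)) (F 0))).
  { apply (@is_RInt_derive R_CompleteNormedModule).
    - intros x _. unfold F, g. auto_derive. trivial. ring.
    - intros x _. apply (@ex_derive_continuous R_AbsRing R_NormedModule).
      unfold g. auto_derive. trivial. }
  assert (HF : minus (F (PI/2)) (F 0) = cos (b * (PI/2))).
  { unfold F, minus, plus, opp; simpl. rewrite cos_PI2, sin_PI2, Rmult_0_r, sin_0. ring. }
  rewrite HF in H1.
  assert (H2 := is_RInt_lin _ _ _ _ (1 - b ^ 2) 0 _ _ (J_correct 1 b) (J_correct 1 b)).
  apply (@is_RInt_unique R_CompleteNormedModule) in H1. apply (@is_RInt_unique R_CompleteNormedModule) in H2.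
  rewrite H1 in H2. lra.
Qed.

Lemma J1_0 : J 1 0 = 1.
Proof. pose proof (J1 0). rewrite Rmult_0_l, cos_0 in H. lra. Qed.

Lemma RInt_lin n1 b1 n2 b2 A B :
  RInt (fun t => A * g n1 b1 t - B * g n2 b2 t) 0 (PI/2) = A * J n1 b1 - B * J n2 b2.
Proof.
  apply (@is_RInt_unique R_CompleteNormedModule). apply is_RInt_lin; apply J_correct.
Qed.

Lemma ex_RInt_lin n1 b1 n2 b2 A B :
  ex_RInt (fun t => A * g n1 b1 t - B * g n2 b2 t) 0 (PI/2).
Proof.
  eexists. apply is_RInt_lin; apply J_correct.
Qed.

Lemma J_bound n b : 0 <= b <= 1 ->
  0 <= J n 0 - J n b <= J n 0 - J (S (S n)) 0.
Proof.
  intros Hb.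
  assert (Hp : forall t, 0 < t < PI/2 ->
     0 <= 1 * g n 0 t - 1 * g n b t <= 1 * g n 0 t - 1 * g (S (S n)) 0 t).
  { intros t Ht. unfold g. rewrite !Rmult_0_l, cos_0.
    assert (Hc : 0 <= cos t) by (apply cos_ge_0; lra).
    assert (Hc1 : cos t <= 1) by (apply COS_bound).
    assert (Hcn : 0 <= cos t ^ n) by (apply pow_le; lra).
    assert (Hbt : cos t <= cos (b * t)).
    { pose proof PI_RGT_0.
      destruct (Rle_lt_or_eq_dec (b*t) t) as [E|E]; [nra| |rewrite E; lra].
      apply Rlt_le, cos_decreasing_1; nra. }
    assert (Hbt1 : cos (b * t) <= 1) by apply COS_bound.
    simpl pow. split; [nra|].
    assert (h : 1 - cos (b*t) <= 1 - cos t * cos t) by nra.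
    assert (cos t ^ n * (1 - cos (b*t)) <= cos t ^ n * (1 - cos t * cos t))
      by (apply Rmult_le_compat_l; lra).
    lra. }
  replace (J n 0 - J n b) with (RInt (fun t => 1 * g n 0 t - 1 * g n b t) 0 (PI/2))
    by (rewrite RInt_lin; rewrite !Rmult_1_l; reflexivity).
  replace (J n 0 - J (S (S n)) 0) with (RInt (fun t => 1 * g n 0 t - 1 * g (S (S n)) 0 t) 0 (PI/2))
    by (rewrite RInt_lin; rewrite !Rmult_1_l; reflexivity).
  split.
  - assert (Z : RInt (fun _ => 0) 0 (PI/2) = 0).
    { rewrite RInt_const. unfold scal; simpl. unfold mult; simpl. ring. }
    apply Rle_trans with (RInt (fun _ => 0) 0 (PI/2)); [rewrite Z; lra|].
    apply RInt_le. pose proof PI_RGT_0; lra.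
    apply (@ex_RInt_const R_CompleteNormedModule). apply ex_RInt_lin.
    intros; apply Hp; auto.
  - apply RInt_le. pose proof PI_RGT_0; lra. apply ex_RInt_lin. apply ex_RInt_lin.
    intros; apply Hp; auto.
Qed.

Definition Pc (b : R) (m : nat) := prod_1_to (fun k => 1 - b^2 / (2 * INR k - 1)^2) m.

Lemma J0_rec m : J (S (S m)) 0 = INR (S m) / INR (S (S m)) * J m 0.
Proof.
  pose proof (J_rec m 0) as H.
  assert (0 < INR (S (S m))) by (apply lt_0_INR; lia).
  apply Rmult_eq_reg_l with (INR (S (S m)) ^ 2). 2: apply pow_nonzero; lra.
  replace (INR (S (S m)) ^ 2) with (INR (S (S m)) ^ 2 - 0 ^ 2) at 1 by ring.
  rewrite H. field. lra.
Qed.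

Lemma J0_pos_odd m : 0 < J (2 * m + 1) 0.
Proof.
  induction m as [|m IH].
  - simpl. rewrite J1_0. lra.
  - replace (2 * S m + 1)%nat with (S (S (2 * m + 1))) by lia.
    rewrite J0_rec. apply Rmult_lt_0_compat; auto.
    apply Rdiv_lt_0_compat; apply lt_0_INR; lia.
Qed.

Lemma key m b : 0 <= b < 1 ->
  cos (b * (PI/2)) * J (2 * m + 1) 0 = Pc b (S m) * J (2 * m + 1) b.
Proof.
  intros Hb. induction m as [|m IH].
  - simpl. rewrite J1_0, <- J1. unfold Pc; simpl. field.
  - replace (2 * S m + 1)%nat with (S (S (2 * m + 1))) by lia.
    rewrite J0_rec. pose proof (J_rec (2 * m + 1) b) as HR.
    unfold Pc in *. change (prod_1_to (fun k => 1 - b ^ 2 / (2 * INR k - 1) ^ 2) (S (S m)))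
      with (prod_1_to (fun k => 1 - b ^ 2 / (2 * INR k - 1) ^ 2) (S m) * (1 - b ^ 2 / (2 * INR (S (S m)) - 1) ^ 2)).
    assert (E : 2 * INR (S (S m)) - 1 = INR (S (S (2 * m + 1)))).
    { rewrite !S_INR, plus_INR, mult_INR. simpl. ring. }
    rewrite E.
    assert (E2 : INR (S (2 * m + 1)) = INR (S (S (2 * m + 1))) - 1) by (rewrite (S_INR (S _)); ring).
    rewrite E2 in *.
    set (N := INR (S (S (2 * m + 1)))) in *.
    assert (HN : 3 <= N).
    { unfold N. rewrite !S_INR, plus_INR, mult_INR. pose proof (pos_INR m). simpl. lra. }
    assert (HJ : J (2 * m + 1) b = (N ^ 2 - b ^ 2) * J (S (S (2 * m + 1))) b / (N * (N - 1))).
    { rewrite HR. field. lra. }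
    rewrite Rmult_comm, Rmult_assoc, (Rmult_comm (J _ 0)), IH, HJ.
    field. lra.
Qed.

Lemma inv_S_lim : is_lim_seq (fun n => / INR (S n)) 0.
Proof.
  assert (H0 := is_lim_seq_inv _ _ is_lim_seq_INR ltac:(discriminate)).
  simpl in H0. apply is_lim_seq_incr_1 in H0. exact H0.
Qed.

Lemma cos_prod b : 0 <= b < 1 -> is_lim_seq (Pc b) (cos (b * (PI/2))).
Proof.
  intros Hb. apply is_lim_seq_incr_1.
  set (C := cos (b * (PI/2))).
  assert (HC : 0 <= C).
  { unfold C. pose proof PI_RGT_0. apply cos_ge_0; nra. }
  apply is_lim_seq_le_le with (u := fun _ => C) (w := fun m => C + C * / INR (S m)).
  - intros m. pose proof (key m b Hb) as HK. fold C in HK.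
    pose proof (J0_pos_odd m) as H0.
    pose proof (J_bound (2*m+1) b ltac:(lra)) as [B1 B2].
    rewrite J0_rec in B2.
    set (n := (2 * m + 1)%nat) in *.
    assert (En : INR (S n) = 2 * INR m + 2).
    { unfold n. rewrite S_INR, plus_INR, mult_INR. simpl. ring. }
    assert (En2 : INR (S (S n)) = 2 * INR m + 3) by (rewrite S_INR, En; ring).
    rewrite En, En2 in B2.
    pose proof (pos_INR m).
    assert (HJb : (2 * INR m + 2) / (2 * INR m + 3) * J n 0 <= J n b) by lra.
    assert (HJb' : 0 < J n b).
    { eapply Rlt_le_trans; [|exact HJb]. apply Rmult_lt_0_compat; auto.
      apply Rdiv_lt_0_compat; lra. }
    assert (HP : Pc b (S m) = C * J n 0 / J n b) by (rewrite HK; field; lra).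
    assert (HA : J n 0 <= (1 + / (INR m + 1)) * J n b).
    { assert (HH := Rmult_le_compat_l (2 * INR m + 3) _ _ ltac:(lra) HJb).
      replace ((2 * INR m + 3) * ((2 * INR m + 2) / (2 * INR m + 3) * J n 0))
        with ((2 * INR m + 2) * J n 0) in HH by (field; lra).
      apply Rmult_le_reg_l with (2 * INR m + 2). lra.
      replace ((2 * INR m + 2) * ((1 + / (INR m + 1)) * J n b)) with ((2 * INR m + 4) * J n b)
        by (field; lra).
      lra. }
    assert (r1 : 1 <= J n 0 / J n b).
    { apply Rmult_le_reg_r with (J n b); auto. unfold Rdiv.
      rewrite Rmult_assoc, Rinv_l, Rmult_1_r by lra. lra. }
    assert (r2 : J n 0 / J n b <= 1 + / (INR m + 1)).
    { apply Rmult_le_reg_r with (J n b); auto. unfold Rdiv.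
      rewrite Rmult_assoc, Rinv_l, Rmult_1_r by lra. lra. }
    rewrite HP, S_INR. unfold Rdiv. rewrite Rmult_assoc. fold (J n 0 / J n b).
    split; nra.
  - apply is_lim_seq_const.
  - replace (Finite C) with (Finite (C + C * 0)) by (f_equal; ring).
    apply is_lim_seq_plus'. apply is_lim_seq_const.
    apply is_lim_seq_mult'. apply is_lim_seq_const. apply inv_S_lim.
Qed.

Lemma cont_exp x : continuity_pt exp x.
Proof. apply continuity_pt_filterlim. apply (@ex_derive_continuous R_AbsRing R_NormedModule). auto_derive. auto. Qed.

Lemma cont_ln x : 0 < x -> continuity_pt ln x.
Proof. intros. apply continuity_pt_filterlim. apply (@ex_derive_continuous R_AbsRing R_NormedModule). auto_derive. auto. Qed.

Lemma conv_lemma2 (t : nat -> R) (M0 : R) :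
  (forall k, (2 <= k)%nat -> Rabs (t k) <= M0 / (INR k)^2) ->
  exists l : R, is_lim_seq (sum1 t) l.
Proof.
  intros H. apply (conv_lemma t (Rmax M0 (Rabs (t 1%nat)))).
  intros k Hk. destruct (Nat.eq_dec k 1) as [->|Hk1].
  - replace (INR 1 ^ 2) with 1 by (simpl; ring). unfold Rdiv. rewrite Rinv_1, Rmult_1_r. apply Rmax_r.
  - eapply Rle_trans. apply H; lia. unfold Rdiv. apply Rmult_le_compat_r.
    + apply Rlt_le, Rinv_0_lt_compat, pow_lt, lt_0_INR; lia.
    + apply Rmax_l.
Qed.

Lemma bf_pos w k : -1 < w -> (1 <= k)%nat -> 0 < barnes_factor w k.
Proof.
  intros Hw Hk. unfold barnes_factor. apply Rmult_lt_0_compat; [|apply exp_pos].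
  apply pow_lt. assert (1 <= INR k) by (apply (le_INR 1); lia).
  assert (-1 < w / INR k).
  { apply Rmult_lt_reg_r with (INR k). lra. unfold Rdiv. rewrite Rmult_assoc, Rinv_l by lra. nra. }
  lra.
Qed.

Lemma ln_bf w k : -1 < w -> (1 <= k)%nat ->
  ln (barnes_factor w k) = INR k * ln (1 + w / INR k) + (- w + w ^ 2 / (2 * INR k)).
Proof.
  intros Hw Hk. unfold barnes_factor.
  assert (1 <= INR k) by (apply (le_INR 1); lia).
  assert (-1 < w / INR k).
  { apply Rmult_lt_reg_r with (INR k). lra. unfold Rdiv. rewrite Rmult_assoc, Rinv_l by lra. nra. }
  rewrite ln_mult, ln_pow, ln_exp; try lra. apply pow_lt; lra. apply exp_pos.
Qed.

Lemma barnes_lim w : -1 < w < 1 ->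
  exists p : R, is_lim_seq (sum1 (fun k => ln (barnes_factor w k))) p.
Proof.
  intros Hw. apply (conv_lemma2 _ 2). intros k Hk.
  assert (HK : 2 <= INR k) by (apply (le_INR 2); lia).
  rewrite ln_bf by (lra || lia).
  set (u := w / INR k).
  assert (Hu : Rabs u <= 1/2).
  { unfold u. rewrite Rabs_div by lra. rewrite (Rabs_pos_eq (INR k)) by lra.
    apply Rmult_le_reg_r with (INR k). lra. unfold Rdiv. rewrite Rmult_assoc, Rinv_l by lra.
    assert (Rabs w < 1) by (apply Rabs_def1; lra). lra. }
  assert (E : INR k * ln (1 + u) + (- w + w ^ 2 / (2 * INR k)) = INR k * (ln (1 + u) - u + u^2/2)).
  { unfold u. field. lra. }
  rewrite E, Rabs_mult, Rabs_pos_eq by lra.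
  pose proof (ln_taylor u Hu) as HT.
  assert (Hw3 : Rabs u ^ 3 = Rabs w ^ 3 / INR k ^ 3).
  { unfold u. rewrite Rabs_div, (Rabs_pos_eq (INR k)) by lra. field. lra. }
  rewrite Hw3 in HT.
  assert (Hw1 : Rabs w ^ 3 <= 1).
  { assert (Rabs w < 1) by (apply Rabs_def1; lra). pose proof (Rabs_pos w).
    replace 1 with (1 ^ 3) by ring. apply pow_incr. lra. }
  apply Rle_trans with (INR k * (2 * (Rabs w ^ 3 / INR k ^ 3))).
  - apply Rmult_le_compat_l; lra.
  - replace (INR k * (2 * (Rabs w ^ 3 / INR k ^ 3))) with (2 * Rabs w ^ 3 / INR k ^ 2) by (field; lra).
    unfold Rdiv. apply Rmult_le_compat_r. apply Rlt_le, Rinv_0_lt_compat, pow_lt; lra. lra.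
Qed.

Lemma BarnesG_ln z (p : R) : -1 < z - 1 ->
  is_lim_seq (sum1 (fun k => ln (barnes_factor (z - 1) k))) p ->
  ln (BarnesG z) = (z - 1) / 2 * ln (2 * PI) - ((z - 1) + (1 + euler_gamma) * (z - 1) ^ 2) / 2 + p.
Proof.
  intros Hw Hp. unfold BarnesG.
  assert (HL : Lim_seq (fun N => prod_1_to (barnes_factor (z - 1)) N) = Finite (exp p)).
  { apply is_lim_seq_unique.
    apply (is_lim_seq_ext (fun N => exp (sum1 (fun k => ln (barnes_factor (z - 1) k)) N))).
    - intros N. symmetry. apply prod_exp. intros k Hk. apply bf_pos; auto.
    - apply is_lim_seq_continuous; [apply cont_exp | exact Hp]. }
  rewrite HL. simpl real. unfold Rpower.
  rewrite !ln_mult by apply exp_pos || (apply Rmult_lt_0_compat; apply exp_pos).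
  rewrite !ln_exp. unfold Rdiv. ring.
Qed.

Lemma C2_factor_pos a n : 0 < C2_factor a n.
Proof. unfold C2_factor, Rpower. apply Rmult_lt_0_compat; apply exp_pos. Qed.

Lemma lim_sub2 (G : nat -> R) (l : R) : is_lim_seq G l ->
  is_lim_seq (fun n => G (2 * n + 1)%nat - G n) 0.
Proof.
  intros H.
  assert (H2 : is_lim_seq (fun n => G (2 * n + 1)%nat) l).
  { apply (is_lim_seq_subseq G l (fun n => (2 * n + 1)%nat)); auto.
    intros P [N HN]. exists N. intros n Hn. apply HN. lia. }
  replace (Finite 0) with (Finite (l - l)) by (f_equal; ring).
  apply is_lim_seq_minus'; auto.
Qed.

Lemma ln_le_u u : 0 <= u -> ln (1 + u) <= u.
Proof.
  intros Hu. pose proof (exp_ineq1_le (ln (1 + u))). rewrite exp_ln in H by lra. lra.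
Qed.

Lemma ln_ge_u u : 0 <= u -> u / (1 + u) <= ln (1 + u).
Proof.
  intros Hu. pose proof (ln_le_u (/(1+u) - 1)).
  pose proof (exp_ineq1_le (ln (/ (1 + u)))). rewrite exp_ln in H0.
  2: apply Rinv_0_lt_compat; lra.
  rewrite ln_Rinv in H0 by lra.
  replace (u / (1 + u)) with (1 - / (1 + u)) by (field; lra). lra.
Qed.

Lemma lim_nlog c : 0 <= c ->
  is_lim_seq (fun n => INR (S n) * (ln (INR (S n) + c) - ln (INR (S n)))) c.
Proof.
  intros Hc.
  apply is_lim_seq_le_le with (u := fun n => c - c * c * / INR (S n)) (w := fun _ => c).
  - intros n. set (y := INR (S n)).
    assert (Hy : 1 <= y) by (unfold y; rewrite S_INR; pose proof (pos_INR n); lra).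
    assert (E : ln (y + c) - ln y = ln (1 + c / y)).
    { rewrite <- ln_div by lra. f_equal. field. lra. }
    rewrite E.
    assert (Hcy : 0 <= c / y) by (apply Rdiv_le_0_compat; lra).
    pose proof (ln_le_u _ Hcy). pose proof (ln_ge_u _ Hcy).
    split.
    + apply Rle_trans with (y * (c / y / (1 + c / y))).
      * replace (y * (c / y / (1 + c / y))) with (c - c * c / (y + c)) by (field; lra).
        unfold Rdiv.
        assert (/ (y + c) <= / y) by (apply Rinv_le_contravar; lra).
        assert (0 <= c * c) by nra. nra.
      * apply Rmult_le_compat_l; lra.
    + replace c with (y * (c / y)) at 2 by (field; lra). apply Rmult_le_compat_l; lra.
  - replace (Finite c) with (Finite (c - c * c * 0)) by (f_equal; ring).
    apply is_lim_seq_minus'. apply is_lim_seq_const.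
    apply is_lim_seq_mult'. apply is_lim_seq_const. apply inv_S_lim.
  - apply is_lim_seq_const.
Qed.

Lemma BarnesG_pos z (p : R) : -1 < z - 1 ->
  is_lim_seq (sum1 (fun k => ln (barnes_factor (z - 1) k))) p -> 0 < BarnesG z.
Proof.
  intros Hw Hp. unfold BarnesG.
  assert (HL : Lim_seq (fun N => prod_1_to (barnes_factor (z - 1)) N) = Finite (exp p)).
  { apply is_lim_seq_unique.
    apply (is_lim_seq_ext (fun N => exp (sum1 (fun k => ln (barnes_factor (z - 1) k)) N))).
    - intros N. symmetry. apply prod_exp. intros k Hk. apply bf_pos; auto.
    - apply is_lim_seq_continuous; [apply cont_exp | exact Hp]. }
  rewrite HL. simpl real. unfold Rpower.
  repeat apply Rmult_lt_0_compat; apply exp_pos.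
Qed.

Definition Tsum N := sum1 (fun k => ln (INR k)) N.
Definition Ssum N := sum1 (fun k => ln (INR k - 1/2)) N.
Definition Ff N := Tsum N - (INR N + 1/2) * ln (INR N) + INR N.
Definition dd k := 1 - (INR k + 1/2) * ln (1 + / INR k).

Lemma ST N : Ssum N + Tsum N = Tsum (2 * N) - 2 * INR N * ln 2.
Proof.
  induction N as [|N IH].
  - unfold Ssum, Tsum; simpl. ring.
  - replace (2 * S N)%nat with (S (S (2 * N))) by lia.
    unfold Ssum, Tsum in *.
    change (sum1 (fun k => ln (INR k - 1/2)) (S N)) with (sum1 (fun k => ln (INR k - 1/2)) N + ln (INR (S N) - 1/2)).
    change (sum1 (fun k => ln (INR k)) (S N)) with (sum1 (fun k => ln (INR k)) N + ln (INR (S N))).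
    change (sum1 (fun k => ln (INR k)) (S (S (2 * N))))
      with (sum1 (fun k => ln (INR k)) (2 * N) + ln (INR (S (2 * N))) + ln (INR (S (S (2 * N))))).
    assert (E1 : INR (S (2 * N)) = 2 * INR N + 1) by (rewrite S_INR, mult_INR; simpl; ring).
    assert (E2 : INR (S (S (2 * N))) = 2 * INR N + 2) by (rewrite S_INR, E1; ring).
    assert (E3 : INR (S N) = INR N + 1) by apply S_INR.
    pose proof (pos_INR N).
    rewrite E1, E2, E3.
    replace (INR N + 1 - 1/2) with ((2 * INR N + 1) / 2) by field.
    replace (INR N + 1) with ((2 * INR N + 2) / 2) by field.
    rewrite !ln_div by lra.
    replace (2 * ((2 * INR N + 2) / 2)) with (2 * INR N + 2) by field.
    lra.
Qed.

Lemma F_step n : Ff (S (S n)) = Ff (S n) + dd (S n).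
Proof.
  unfold Ff, dd, Tsum. change (sum1 (fun k => ln (INR k)) (S (S n)))
    with (sum1 (fun k => ln (INR k)) (S n) + ln (INR (S (S n)))).
  assert (E1 : INR (S (S n)) = INR (S n) + 1) by apply S_INR.
  assert (H1 : 1 <= INR (S n)) by (rewrite S_INR; pose proof (pos_INR n); lra).
  rewrite E1.
  replace (1 + / INR (S n)) with ((INR (S n) + 1) / INR (S n)) by (field; lra).
  rewrite ln_div by lra. ring.
Qed.

Lemma F_G n : Ff (S n) = 1 + sum1 dd n.
Proof.
  induction n as [|n IH].
  - unfold Ff, Tsum. simpl. rewrite ln_1. ring.
  - rewrite F_step, IH. simpl. ring.
Qed.

Lemma dd_bound k : (2 <= k)%nat -> Rabs (dd k) <= 4 / INR k ^ 2.
Proof.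
  intros Hk. assert (HK : 2 <= INR k) by (apply (le_INR 2); lia).
  set (u := / INR k).
  assert (Hu : Rabs u <= 1/2).
  { unfold u. rewrite Rabs_pos_eq. apply Rmult_le_reg_r with (INR k). lra.
    rewrite Rinv_l by lra. lra. apply Rlt_le, Rinv_0_lt_compat; lra. }
  pose proof (ln_taylor u Hu) as HT.
  set (e := ln (1 + u) - u + u ^ 2 / 2) in HT.
  assert (E : dd k = / (4 * INR k ^ 2) - (INR k + 1/2) * e).
  { unfold dd, e. fold u. unfold u. field. lra. }
  rewrite E.
  assert (Hu3 : Rabs u ^ 3 = / INR k ^ 3).
  { unfold u. rewrite Rabs_pos_eq. field. lra. apply Rlt_le, Rinv_0_lt_compat; lra. }
  rewrite Hu3 in HT.
  apply Rabs_le_between in HT. apply Rabs_le.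
  assert (Hp : 0 < INR k ^ 2) by (apply pow_lt; lra).
  assert (A1 : (INR k + 1/2) * (2 * / INR k ^ 3) <= 3 / INR k ^ 2).
  { replace ((INR k + 1/2) * (2 * / INR k ^ 3)) with ((2 * INR k + 1) / INR k * / INR k ^ 2) by (field; lra).
    unfold Rdiv. apply Rmult_le_compat_r. apply Rlt_le, Rinv_0_lt_compat; lra.
    apply Rmult_le_reg_r with (INR k). lra. rewrite Rmult_assoc, Rinv_l by lra. lra. }
  assert (A2 : / (4 * INR k ^ 2) <= 1 / INR k ^ 2).
  { unfold Rdiv. rewrite Rmult_1_l. apply Rinv_le_contravar; lra. }
  assert (A3 : 0 <= / (4 * INR k ^ 2)) by (apply Rlt_le, Rinv_0_lt_compat; lra).
  assert (HB : Rabs ((INR k + 1/2) * e) <= 3 / INR k ^ 2).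
  { rewrite Rabs_mult, (Rabs_pos_eq (INR k + 1/2)) by lra.
    eapply Rle_trans; [|exact A1]. apply Rmult_le_compat_l. lra. apply Rabs_le. lra. }
  apply Rabs_le_between in HB. unfold Rdiv in *. lra.
Qed.

Lemma telesc c N : sum1 (fun k => INR k * ln (INR k + c) - (INR k - 1) * ln (INR k - 1 + c)) N
  = INR N * ln (INR N + c).
Proof.
  induction N as [|N IH].
  - simpl. ring.
  - change (sum1 ?f (S N)) with (sum1 f N + f (S N)). cbv beta. rewrite IH. replace (INR (S N) - 1) with (INR N) by (rewrite S_INR; ring). ring.
Qed.

Lemma sum1_const N : sum1 (fun _ => 1) N = INR N.
Proof. induction N; [reflexivity| change (sum1 (fun _ => 1) (S N)) with (sum1 (fun _ => 1) N + 1); rewrite IHN, S_INR; ring]. Qed.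

Lemma term_id x k : 0 <= x < 1 -> (1 <= k)%nat ->
  ln (C2_factor (x/2) (2 * k - 1)) =
    ln (barnes_factor (- (1/2 + x/2)) k) - ln (barnes_factor (1/2 + x/2) k)
    + (INR k * ln (INR k + (1/2 + x/2)) - (INR k - 1) * ln (INR k - 1 + (1/2 + x/2)))
    - 1 - ln (INR k - 1/2) - 1/2 * ln (1 - x ^ 2 / (2 * INR k - 1) ^ 2).
Proof.
  intros Hx Hk.
  assert (HK : 1 <= INR k) by (apply (le_INR 1); lia).
  set (c := 1/2 + x/2). set (a := x/2). set (h := INR k - 1/2).
  assert (Ha : 0 <= a < 1/2) by (unfold a; lra).
  assert (Hh : 1/2 <= h) by (unfold h; lra).
  rewrite ln_bf, ln_bf by (unfold c; lra || lia).
  unfold C2_factor.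
  assert (EI : INR (2 * k - 1) / 2 = h).
  { rewrite minus_INR by lia. rewrite mult_INR. unfold h. simpl. field. }
  rewrite EI.
  rewrite ln_mult by (unfold Rpower; apply exp_pos).
  rewrite ln_Rpower, ln_exp.
  replace ((1 - a / h) / (1 + a / h)) with ((h - a) / (h + a)) by (field; lra).
  rewrite ln_div by lra.
  replace (1 + - c / INR k) with ((h - a) / INR k) by (unfold c, h, a; field; lra).
  replace (1 + c / INR k) with ((INR k + c) / INR k) by (field; lra).
  rewrite !ln_div by (unfold c; lra).
  replace (INR k - 1 + c) with (h + a) by (unfold c, h, a; field).
  replace (1 - x ^ 2 / (2 * INR k - 1) ^ 2) with ((h - a) * (h + a) / (h * h))
    by (unfold h, a; field; lra).
  rewrite ln_div, ln_mult, ln_mult by nra.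
  fold h. unfold c, a, h. field. lra.
Qed.

Lemma sum_id x N : 0 <= x < 1 ->
  sum1 (fun m => ln (C2_factor (x/2) (2 * m - 1))) N =
    sum1 (fun k => ln (barnes_factor (- (1/2 + x/2)) k)) N
    - sum1 (fun k => ln (barnes_factor (1/2 + x/2) k)) N
    + INR N * ln (INR N + (1/2 + x/2)) - INR N - Ssum N
    - 1/2 * sum1 (fun k => ln (1 - x ^ 2 / (2 * INR k - 1) ^ 2)) N.
Proof.
  intros Hx.
  rewrite (sum1_ext _ (fun k =>
    ((((ln (barnes_factor (- (1/2 + x/2)) k) - ln (barnes_factor (1/2 + x/2) k))
    + (INR k * ln (INR k + (1/2 + x/2)) - (INR k - 1) * ln (INR k - 1 + (1/2 + x/2))))
    - 1) - ln (INR k - 1/2)) - 1/2 * ln (1 - x ^ 2 / (2 * INR k - 1) ^ 2))).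
  2: { intros k Hk. apply term_id; auto. }
  rewrite !sum1_minus, sum1_plus, sum1_minus, sum1_scal, telesc, sum1_const.
  unfold Ssum. ring.
Qed.

Lemma Q_lim x : 0 <= x < 1 ->
  is_lim_seq (sum1 (fun k => ln (1 - x ^ 2 / (2 * INR k - 1) ^ 2))) (ln (cos (x * (PI/2)))).
Proof.
  intros Hx.
  assert (Hpos : forall k, (1 <= k)%nat -> 0 < 1 - x ^ 2 / (2 * INR k - 1) ^ 2).
  { intros k Hk. assert (HK : 1 <= INR k) by (apply (le_INR 1); lia).
    assert (x ^ 2 / (2 * INR k - 1) ^ 2 < 1).
    { apply Rmult_lt_reg_r with ((2 * INR k - 1) ^ 2). apply pow_lt; lra.
      unfold Rdiv. rewrite Rmult_assoc, Rinv_l, Rmult_1_r, Rmult_1_l. 2: apply pow_nonzero; lra.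
      simpl. nra. }
    lra. }
  assert (Hc : 0 < cos (x * (PI/2))).
  { pose proof PI_RGT_0. apply cos_gt_0; nra. }
  apply (is_lim_seq_ext (fun N => ln (Pc x N))).
  - intros N. unfold Pc. rewrite prod_exp by auto. apply ln_exp.
  - apply is_lim_seq_continuous. apply cont_ln; auto. apply cos_prod; auto.
Qed.

Theorem mainTheorem18 (x : R) (hx : 0 <= x < 1) :
  ln (C2 (x / 2)) =
    x / 2 * ln (2 * PI) + ln (sqrt PI) - 1 / 2 * ln (cos (PI * x / 2))
    + ln (BarnesG (1 / 2 - x / 2) / BarnesG (3 / 2 + x / 2)).
Proof.
  set (c := 1/2 + x/2).
  destruct (barnes_lim (- c)) as [p1 Hp1]; [unfold c; lra|].
  destruct (barnes_lim c) as [p2 Hp2]; [unfold c; lra|].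
  destruct (conv_lemma2 dd 4 dd_bound) as [l Hl].
  assert (HG : is_lim_seq (fun n => Ff (S n)) (1 + l)).
  { apply (is_lim_seq_ext (fun n => 1 + sum1 dd n)). intros; symmetry; apply F_G.
    apply is_lim_seq_plus'. apply is_lim_seq_const. exact Hl. }
  pose proof (lim_sub2 _ _ HG) as HD.
  pose proof (Q_lim x hx) as HQ.
  pose proof (lim_nlog c ltac:(unfold c; lra)) as HN.
  set (ell := p1 - p2 + c - 1/2 * ln 2 - 0 - 1/2 * ln (cos (x * (PI/2)))).
  assert (HL : is_lim_seq (sum1 (fun m => ln (C2_factor (x/2) (2 * m - 1)))) ell).
  { apply is_lim_seq_incr_1.
    apply (is_lim_seq_ext (fun n =>
       sum1 (fun k => ln (barnes_factor (- c) k)) (S n)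
       - sum1 (fun k => ln (barnes_factor c k)) (S n)
       + INR (S n) * (ln (INR (S n) + c) - ln (INR (S n))) - 1/2 * ln 2
       - (Ff (S (2 * n + 1)) - Ff (S n))
       - 1/2 * sum1 (fun k => ln (1 - x ^ 2 / (2 * INR k - 1) ^ 2)) (S n))).
    - intros n. rewrite sum_id by auto. fold c.
      pose proof (ST (S n)) as HST.
      replace (2 * S n)%nat with (S (2 * n + 1)) in HST by lia.
      unfold Ff. 
      assert (E : INR (S (2 * n + 1)) = 2 * INR (S n)) by (rewrite !S_INR, plus_INR, mult_INR; simpl; ring).
      rewrite E.
      assert (H1 : 0 < INR (S n)) by (apply lt_0_INR; lia).
      rewrite ln_mult by lra.
      lra.
    - unfold ell.
      apply is_lim_seq_minus'.
      2: { apply is_lim_seq_mult'; [apply is_lim_seq_const|]. apply is_lim_seq_incr_1 in HQ. exact HQ. }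
      apply is_lim_seq_minus'; [|exact HD].
      apply is_lim_seq_minus'; [|apply is_lim_seq_const].
      apply is_lim_seq_plus'; [|exact HN].
      apply is_lim_seq_minus'.
      + apply is_lim_seq_incr_1 in Hp1. exact Hp1.
      + apply is_lim_seq_incr_1 in Hp2. exact Hp2. }
  assert (HC2 : ln (C2 (x / 2)) = ell).
  { unfold C2.
    assert (E : Lim_seq (fun N => prod_1_to (fun m => C2_factor (x / 2) (2 * m - 1)) N) = Finite (exp ell)).
    { apply is_lim_seq_unique.
      apply (is_lim_seq_ext (fun N => exp (sum1 (fun m => ln (C2_factor (x/2) (2 * m - 1))) N))).
      - intros N. symmetry. apply prod_exp. intros; apply C2_factor_pos.
      - apply is_lim_seq_continuous; [apply cont_exp | exact HL]. }
    rewrite E. simpl real. apply ln_exp. }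
  assert (HB1 : ln (BarnesG (1/2 - x/2)) =
     (-c) / 2 * ln (2 * PI) - ((-c) + (1 + euler_gamma) * (-c) ^ 2) / 2 + p1).
  { replace (-c) with (1/2 - x/2 - 1) by (unfold c; field).
    apply BarnesG_ln. lra. replace (1/2 - x/2 - 1) with (-c) by (unfold c; field). exact Hp1. }
  assert (HB2 : ln (BarnesG (3/2 + x/2)) =
     c / 2 * ln (2 * PI) - (c + (1 + euler_gamma) * c ^ 2) / 2 + p2).
  { replace c with (3/2 + x/2 - 1) by (unfold c; field).
    apply BarnesG_ln. lra. replace (3/2 + x/2 - 1) with c by (unfold c; field). exact Hp2. }
  assert (Hpos1 : 0 < BarnesG (1/2 - x/2)).
  { apply (BarnesG_pos _ p1). lra. replace (1/2 - x/2 - 1) with (-c) by (unfold c; field). exact Hp1. }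
  assert (Hpos2 : 0 < BarnesG (3/2 + x/2)).
  { apply (BarnesG_pos _ p2). lra. replace (3/2 + x/2 - 1) with c by (unfold c; field). exact Hp2. }
  rewrite ln_div by assumption.
  rewrite HC2, HB1, HB2.
  assert (Hs : ln (sqrt PI) = 1/2 * ln PI).
  { pose proof PI_RGT_0. assert (0 < sqrt PI) by (apply sqrt_lt_R0; lra).
    assert (ln PI = ln (sqrt PI) + ln (sqrt PI)) by (rewrite <- ln_mult, sqrt_sqrt by lra; reflexivity).
    lra. }
  rewrite Hs. rewrite ln_mult by (pose proof PI_RGT_0; lra).
  replace (PI * x / 2) with (x * (PI / 2)) by field.
  unfold ell, c. field.
Qed.
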